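(* Let $f=(f_1,f_2):\mathbb{C}^2\to\mathbb{C}^2$ be a generically non-proper polynomial map with support $A=(A_1,A_2)$. Then $A$ has at most one right long relevant face and at most one left long relevant face.
   Context: $A_i=\operatorname{supp}f_i$. A face of a finite set $S\subset\mathbb{Z}^2$ is the set of points of $S$ minimizing $\langle\alpha,\cdot\rangle$ for some $\alpha\in\mathbb{R}^2$ (which supports it); a face of $A$ is a pair $\Gamma=(\Gamma_1,\Gamma_2)$ with $\Gamma_i$ the face of $A_i$ supported by a common $\alpha$. $\Gamma$ is semi-origin if $(0,0)\in\Gamma_1\cup\Gamma_2$; coordinate if every vector supporting it has one coordinate positive and the other zero; relevant if it is semi-origin, not coordinate, and no $\Gamma_i$ is a single point different from $(0,0)$. Supporting vectors $\alpha=(\alpha_1,\alpha_2)$ of relevant faces satisfy $\alpha_1\alpha_2<0$; a relevant face is left if $\alpha_1>0$ and right if $\alpha_1<0$. A face is long if $\dim\mathrm{conv}(\Gamma_1)=\dim\mathrm{conv}(\Gamma_2)=1$. With $V(B_1,B_2):=\mathrm{Vol}(\mathrm{conv}B_1+\mathrm{conv}B_2)-\mathrm{Vol}(\mathrm{conv}B_1)-\mathrm{Vol}(\mathrm{conv}B_2)$ and $\Sigma$ the support of $|\mathrm{Jac} f|$, $f$ is generically non-proper if it is dominant, non-proper (some $y$, $x_k$ with $\|x_k\|\to\infty$, $f(x_k)\to y$), $f(0,0)\in(\mathbb{C}^* )^2$, and the systems $f_1=f_2=0$, $f_1=|\mathrm{Jac} f|=0$, $f_2=|\mathrm{Jac}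 f|=0$ have respectively $V(A_1,A_2)$, $V(A_1,\Sigma)$, $V(A_2,\Sigma)$ isolated solutions in $(\mathbb{C}^* )^2$ (counted with multiplicity). *)

(* Defs.v *)
From HB Require Import structures.
From mathcomp Require Import all_boot all_order all_algebra.
From mathcomp Require Import complex.
From mathcomp Require Import boolp classical_sets reals ereal.
From mathcomp Require Import measure lebesgue_measure lebesgue_integral.

Set Implicit Arguments.
Unset Strict Implicit.
Unset Printing Implicit Defensive.
Import Order.TTheory GRing.Theory Num.Theory.
Local Open Scope ring_scope.
Local Open Scope classical_set_scope.

(* Conventions.
   - R : realType is the field of real numbers and C := R[i] the complex numbers.
   - A polynomial in two variables x, y is  g : {poly {poly C}}  where the
     inner variable is x and the outer variable is y: the coefficient of
     x^k y^l is  g`_l`_k.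
   - Exponent vectors are pairs (k, l) : nat * nat  (points of Z^2). *)

Section Defs.
Variable R : realType.
Local Notation C := R[i].
Local Notation P2 := {poly {poly C}}.

Definition eval2 (g : P2) (a b : C) : C := g.[b%:P].[a].

Definition supp (g : P2) : set (nat * nat) := [set s | g`_s.2`_s.1 != 0].

Definition dx (g : P2) : P2 := map_poly (fun c : {poly C} => c^`()) g.
Definition dy (g : P2) : P2 := g^`().
Definition jac (f1 f2 : P2) : P2 := dx f1 * dy f2 - dy f1 * dx f2.

Definition dot (a : R * R) (s : nat * nat) : R := a.1 * s.1%:R + a.2 * s.2%:R.

Definition faceS (S : set (nat * nat)) (a : R * R) : set (nat * nat) :=
  [set s | S s /\ forall t, S t -> dot a s <= dot a t].

Definition supports (A1 A2 : set (nat * nat))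
    (G : set (nat * nat) * set (nat * nat)) (a : R * R) : Prop :=
  faceS A1 a = G.1 /\ faceS A2 a = G.2.

Definition is_face A1 A2 G : Prop := exists a, supports A1 A2 G a.

Definition semi_origin (G : set (nat * nat) * set (nat * nat)) : Prop :=
  G.1 (0, 0)%N \/ G.2 (0, 0)%N.

Definition coordinate_face A1 A2 G : Prop :=
  forall a, supports A1 A2 G a ->
    (0 < a.1 /\ a.2 = 0) \/ (a.1 = 0 /\ 0 < a.2).

Definition single_nonorigin (S : set (nat * nat)) : Prop :=
  exists p, p <> (0, 0)%N /\ S = [set p].

Definition relevant A1 A2 G : Prop :=
  semi_origin G /\ ~ coordinate_face A1 A2 G /\
  ~ single_nonorigin G.1 /\ ~ single_nonorigin G.2.

Definition left_face A1 A2 G : Prop := exists a, supports A1 A2 G a /\ 0 < a.1.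
Definition right_face A1 A2 G : Prop := exists a, supports A1 A2 G a /\ a.1 < 0.

Definition dim_conv_one (S : set (nat * nat)) : Prop :=
  (exists p q, S p /\ S q /\ p <> q) /\
  forall p q r, S p -> S q -> S r ->
    ((q.1%:R - p.1%:R) * (r.2%:R - p.2%:R)
     - (q.2%:R - p.2%:R) * (r.1%:R - p.1%:R) = 0 :> R).

Definition long_face (G : set (nat * nat) * set (nat * nat)) : Prop :=
  dim_conv_one G.1 /\ dim_conv_one G.2.

Definition pt (s : nat * nat) : R * R := (s.1%:R, s.2%:R).

Definition conv (B : set (nat * nat)) : set (R * R) :=
  [set x | exists (n : nat) (p : 'I_n -> nat * nat) (w : 'I_n -> R),
     (forall i, B (p i)) /\ (forall i, 0 <= w i) /\ \sum_(i < n) w i = 1 /\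
     x = (\sum_(i < n) w i * (pt (p i)).1, \sum_(i < n) w i * (pt (p i)).2)].

Definition minkowski (X Y : set (R * R)) : set (R * R) :=
  [set z | exists x y, X x /\ Y y /\ z = (x.1 + y.1, x.2 + y.2)].

Definition area (X : set (R * R)) : \bar R :=
  ((@lebesgue_measure R) \x (@lebesgue_measure R))%E X.

Definition mixed_vol (B1 B2 : set (nat * nat)) : \bar R :=
  (area (minkowski (conv B1) (conv B2)) - area (conv B1) - area (conv B2))%E.

Definition shift2 (g : P2) (a b : C) : P2 :=
  map_poly (fun c : {poly C} => c \Po ('X + a%:P)) (g \Po ('X + (b%:P)%:P)).

(* coefficient of x^k y^l in x^i y^j q, truncated modulo m^N = (x,y)^N *)
Definition trcoef (q : P2) (N : nat) (ij kl : nat * nat) : C :=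
  if [&& (kl.1 + kl.2 < N)%N, (ij.1 <= kl.1)%N & (ij.2 <= kl.2)%N]
  then q`_(kl.2 - ij.2)`_(kl.1 - ij.1) else 0.

Definition mon N := ('I_N * 'I_N)%type.

(* rows: the classes of x^i y^j g and x^i y^j h in C[x,y]/m^N,
   in the monomial basis x^k y^l (k + l < N) *)
Definition jet_mx (g h : P2) (N : nat) :
    'M[C]_(#|{: bool * mon N}|, #|{: mon N}|) :=
  \matrix_(r, c)
    let: (bb, ij) := (enum_val r : bool * mon N) in
    let kl := (enum_val c : mon N) in
    trcoef (if bb then g else h) N (nat_of_ord ij.1, nat_of_ord ij.2)
      (nat_of_ord kl.1, nat_of_ord kl.2).

(* dim_C  C[x,y] / ((g, h) + m_p^N), m_p the maximal ideal of p *)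
Definition quot_dim (g h : P2) (p : C * C) (N : nat) : nat :=
  (#|[set kl : mon N | (kl.1 + kl.2 < N)%N]|
   - \rank (jet_mx (shift2 g p.1 p.2) (shift2 h p.1 p.2) N))%N.

(* the intersection multiplicity of g = h = 0 at an isolated solution p,
   i.e. dim_C of the local ring O_p / (g, h), which equals
   dim_C C[x,y]/((g,h) + m_p^N) for all large N *)
Definition local_mult (g h : P2) (p : C * C) (m : nat) : Prop :=
  exists N0, forall N, (N0 <= N)%N -> quot_dim g h p N = m.

Definition isolated_torus_sol (g h : P2) (p : C * C) : Prop :=
  [/\ p.1 != 0, p.2 != 0, eval2 g p.1 p.2 = 0, eval2 h p.1 p.2 = 0 &
   exists e : C, 0 < e /\ forall q : C * C, `|q.1 - p.1| < e -> `|q.2 - p.2| < e ->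
      eval2 g q.1 q.2 = 0 -> eval2 h q.1 q.2 = 0 -> q = p].

Definition num_isolated_sols (g h : P2) (n : nat) : Prop :=
  exists (s : seq (C * C)) (ms : seq nat),
    [/\ uniq s, forall p, p \in s <-> isolated_torus_sol g h p,
        size ms = size s,
        forall i, (i < size s)%N -> local_mult g h (nth (0, 0) s i) (nth 0%N ms i)
      & sumn ms = n].

Definition has_isolated_count (g h : P2) (V : \bar R) : Prop :=
  exists n : nat, num_isolated_sols g h n /\ V = ((n%:R : R)%:E)%E.

(* dominant : the image is Zariski dense, i.e. no nonzero polynomial vanishes on it *)
Definition dominant (f1 f2 : P2) : Prop :=
  forall G : P2, (forall a b, eval2 G (eval2 f1 a b) (eval2 f2 a b) = 0) -> G = 0.

Definition norm2 (x : C * C) : C := sqrtC (`|x.1| ^+ 2 + `|x.2| ^+ 2).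

Definition non_proper (f1 f2 : P2) : Prop :=
  exists (y : C * C) (x : nat -> C * C),
    (forall M : nat, exists K, forall k, (K <= k)%N -> M%:R < norm2 (x k)) /\
    (forall e : C, 0 < e -> exists K, forall k, (K <= k)%N ->
        `|eval2 f1 (x k).1 (x k).2 - y.1| < e /\ `|eval2 f2 (x k).1 (x k).2 - y.2| < e).

Definition generically_non_proper (f1 f2 : P2) : Prop :=
  [/\ dominant f1 f2, non_proper f1 f2,
      eval2 f1 0 0 != 0 /\ eval2 f2 0 0 != 0 &
      [/\ has_isolated_count f1 f2 (mixed_vol (supp f1) (supp f2)),
          has_isolated_count f1 (jac f1 f2) (mixed_vol (supp f1) (supp (jac f1 f2)))
        & has_isolated_count f2 (jac f1 f2) (mixed_vol (supp f2) (supp (jac f1 f2)))]].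

End Defs.

(* Main.v *)
Require Import Defs.
From HB Require Import structures.
From mathcomp Require Import all_boot all_order all_algebra.
From mathcomp Require Import complex.
From mathcomp Require Import boolp classical_sets reals ereal.
From mathcomp Require Import measure lebesgue_measure lebesgue_integral.
From mathcomp Require Import ring lra.
Import Order.TTheory GRing.Theory Num.Theory.

Local Open Scope ring_scope.
Local Open Scope classical_set_scope.
Lemma p2pos (R : realType) (a1 a2 p1 p2 : R) : a1 != 0 -> 0 <= p1 -> 0 <= p2 -> 0 < p1 + p2 ->
  a1 * p1 + a2 * p2 = 0 -> 0 < p2.
Proof.
move=> a10 hp1 hp2 hp ha; rewrite lt_neqAle hp2 andbT; apply/eqP=> p20.
move: ha; rewrite -p20 mulr0 addr0 => /eqP; rewrite mulf_eq0 (negbTE a10) /= => /eqP p10.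
by move: hp; rewrite p10 -p20 addr0 ltxx.
Qed.

Lemma coreA (R : realType) (a1 a2 b1 b2 p1 p2 q1 q2 : R) : 0 < a1 * b1 ->
  0 <= p1 -> 0 <= p2 -> 0 < p1 + p2 -> 0 <= q1 -> 0 <= q2 -> 0 < q1 + q2 ->
  a1 * p1 + a2 * p2 = 0 -> b1 * q1 + b2 * q2 = 0 -> 0 <= a1 * q1 + a2 * q2 -> 0 <= b1 * p1 + b2 * p2 ->
  a1 * b2 = a2 * b1.
Proof.
move=> hab hp1 hp2 hp hq1 hq2 hq ha hb hq' hp'.
have a10 : a1 != 0 by apply/eqP=> a0; move: hab; rewrite a0 mul0r ltxx.
have b10 : b1 != 0 by apply/eqP=> a0; move: hab; rewrite a0 mulr0 ltxx.
have Hp2 := @p2pos _ _ _ _ _ a10 hp1 hp2 hp ha.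
have Hq2 := @p2pos _ _ _ _ _ b10 hq1 hq2 hq hb.
have e1 : p2 * (a1 * q1 + a2 * q2) = - a1 * (p1 * q2 - p2 * q1) + q2 * (a1 * p1 + a2 * p2) by ring.
have e2 : q2 * (b1 * p1 + b2 * p2) = b1 * (p1 * q2 - p2 * q1) + p2 * (b1 * q1 + b2 * q2) by ring.
rewrite ha mulr0 addr0 in e1; rewrite hb mulr0 addr0 in e2.
have f1 : 0 <= - a1 * (p1 * q2 - p2 * q1) by rewrite -e1 mulr_ge0 // ltW.
have f2 : 0 <= b1 * (p1 * q2 - p2 * q1) by rewrite -e2 mulr_ge0 // ltW.
have D0 : p1 * q2 - p2 * q1 = 0 by nra.
have e3 : p2 * q2 * (a1 * b2 - a2 * b1) = a1 * b1 * (p1 * q2 - p2 * q1) + a1 * p2 * (b1 * q1 + b2 * q2) - b1 * q2 * (a1 * p1 + a2 * p2) by ring.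
rewrite D0 ha hb !mulr0 subr0 addr0 in e3.
apply/eqP; rewrite -subr_eq0; apply/eqP.
apply: (@mulfI _ (p2 * q2)); first by rewrite mulf_neq0 // gt_eqF.
by rewrite e3 mulr0.
Qed.

Lemma coreB (R : realType) (a1 a2 b1 b2 p1 p2 q1 q2 s1 s2 t1 t2 : R) : 0 < a1 * b1 ->
  0 <= p1 -> 0 <= p2 -> 0 < p1 + p2 -> 0 <= q1 -> 0 <= q2 -> 0 < q1 + q2 ->
  0 <= s1 -> 0 <= s2 -> 0 < s1 + s2 -> 0 <= t1 -> 0 <= t2 -> 0 < t1 + t2 ->
  a1 * p1 + a2 * p2 = 0 -> b1 * q1 + b2 * q2 = 0 -> a1 * s1 + a2 * s2 <= 0 -> 0 <= b1 * s1 + b2 * s2 ->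
  b1 * t1 + b2 * t2 <= 0 -> 0 <= a1 * t1 + a2 * t2 ->
  a1 * b2 = a2 * b1.
Proof.
move=> hab hp1 hp2 hp hq1 hq2 hq hs1 hs2 hs ht1 ht2 ht ha hb has hbs hbt hat.
have a10 : a1 != 0 by apply/eqP=> a0; move: hab; rewrite a0 mul0r ltxx.
have b10 : b1 != 0 by apply/eqP=> a0; move: hab; rewrite a0 mulr0 ltxx.
have Hp2 := @p2pos _ _ _ _ _ a10 hp1 hp2 hp ha.
have Hq2 := @p2pos _ _ _ _ _ b10 hq1 hq2 hq hb.
have e1 : p2 * (a1 * s1 + a2 * s2) = - a1 * (p1 * s2 - p2 * s1) + s2 * (a1 * p1 + a2 * p2) by ring.
have e2 : q2 * (b1 * s1 + b2 * s2) = - b1 * (q1 * s2 - q2 * s1) + s2 * (b1 * q1 + b2 * q2) by ring.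
have e3 : q2 * (b1 * t1 + b2 * t2) = - b1 * (q1 * t2 - q2 * t1) + t2 * (b1 * q1 + b2 * q2) by ring.
have e4 : p2 * (a1 * t1 + a2 * t2) = - a1 * (p1 * t2 - p2 * t1) + t2 * (a1 * p1 + a2 * p2) by ring.
rewrite ha mulr0 addr0 in e1; rewrite ha mulr0 addr0 in e4.
rewrite hb mulr0 addr0 in e2; rewrite hb mulr0 addr0 in e3.
have i1 : (p1 * s2 - p2 * s1) * (q1 + q2) = (p1 * q2-p2 * q1) * (s1 + s2) + (q1 * s2-q2 * s1) * (p1 + p2) by ring.
have i2 : (q1 * t2 - q2 * t1) * (p1 + p2) = -(p1 * q2-p2 * q1) * (t1 + t2) + (p1 * t2-p2 * t1) * (q1 + q2) by ring.
have f1 : - a1 * (p1 * s2 - p2 * s1) <= 0 by rewrite -e1 mulr_ge0_le0 // ltW.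
have f2 : 0 <= - b1 * (q1 * s2 - q2 * s1) by rewrite -e2 mulr_ge0 // ltW.
have f3 : - b1 * (q1 * t2 - q2 * t1) <= 0 by rewrite -e3 mulr_ge0_le0 // ltW.
have f4 : 0 <= - a1 * (p1 * t2 - p2 * t1) by rewrite -e4 mulr_ge0 // ltW.
have D0 : p1 * q2 - p2 * q1 = 0.
  case: (ltP a1 0) => ha1.
    have hb1 : b1 < 0 by nra.
    have g1 : p1 * s2 - p2 * s1 <= 0 by nra.
    have g2 : 0 <= q1 * s2 - q2 * s1 by nra.
    have g3 : q1 * t2 - q2 * t1 <= 0 by nra.
    have g4 : 0 <= p1 * t2 - p2 * t1 by nra.
    nra.
  have ha1' : 0 < a1 by rewrite lt_neqAle eq_sym a10.
  have hb1 : 0 < b1 by nra.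
  have g1 : 0 <= p1 * s2 - p2 * s1 by nra.
  have g2 : q1 * s2 - q2 * s1 <= 0 by nra.
  have g3 : 0 <= q1 * t2 - q2 * t1 by nra.
  have g4 : p1 * t2 - p2 * t1 <= 0 by nra.
  nra.
have e5 : p2 * q2 * (a1 * b2 - a2 * b1) = a1 * b1 * (p1 * q2 - p2 * q1) + a1 * p2 * (b1 * q1 + b2 * q2) - b1 * q2 * (a1 * p1 + a2 * p2) by ring.
rewrite D0 ha hb !mulr0 subr0 addr0 in e5.
apply/eqP; rewrite -subr_eq0; apply/eqP.
apply: (@mulfI _ (p2 * q2)); first by rewrite mulf_neq0 // gt_eqF.
by rewrite e5 mulr0.
Qed.

Lemma sgn_transfer (R : realType) (a1 b1 x y : R) :
  0 < a1 * b1 -> a1 * y = b1 * x -> 0 <= x -> 0 <= y.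
Proof.
move=> h e hx.
have E : (a1 * b1) * y = (b1 * b1) * x by rewrite -[RHS]mulrA -e; ring.
by rewrite -(pmulr_rge0 _ h) E mulr_ge0 // -expr2 sqr_ge0.
Qed.

Lemma faceS_par (R : realType) (S : set (nat * nat)) (a b : R * R) :
  0 < a.1 * b.1 -> a.1 * b.2 = a.2 * b.1 -> faceS S a = faceS S b.
Proof.
move=> hab hpar.
have key : forall x, a.1 * dot b x = b.1 * dot a x.
  by move=> x; rewrite /dot mulrDr mulrDr !mulrA hpar [a.1 * b.1]mulrC [b.1 * a.2]mulrC.
have hba : 0 < b.1 * a.1 by rewrite mulrC.
apply/seteqP; split=> x [Sx Hx]; split=> // t St; rewrite -subr_ge0.
- apply: (@sgn_transfer R a.1 b.1 (dot a t - dot a x)) => //.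
    by rewrite !mulrBr !key.
  by rewrite subr_ge0; apply: Hx.
- apply: (@sgn_transfer R b.1 a.1 (dot b t - dot b x)) => //.
    by rewrite !mulrBr !key.
  by rewrite subr_ge0; apply: Hx.
Qed.

Lemma dot0 (R : realType) (a : R * R) : dot a (0, 0)%N = 0.
Proof. by rewrite /dot /= !mulr0 addr0. Qed.

Lemma nzpos (R : realType) (p : nat * nat) : p <> (0, 0)%N -> 0 < p.1%:R + p.2%:R :> R.
Proof.
case: p => [[|m] [|n]] H //=; rewrite -natrD ltr0n //.
Qed.

Lemma nonzero_of (F : set (nat * nat)) :
  (exists p q, F p /\ F q /\ p <> q) -> exists p, F p /\ p <> (0, 0)%N.
Proof.
move=> [p [q [Fp [Fq npq]]]].
case: (pselect (p = (0, 0)%N)) => [p0|p0]; last by exists p.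
by exists q; split => // q0; apply: npq; rewrite p0 q0.
Qed.

Lemma extract (R : realType) (S T : set (nat * nat)) (a : R * R) :
  S (0, 0)%N -> T (0, 0)%N -> faceS S a (0, 0)%N ->
  dim_conv_one R (faceS S a) -> dim_conv_one R (faceS T a) ->
  exists p s, [/\ p <> (0, 0)%N, S p, dot a p = 0 & (forall x, S x -> 0 <= dot a x)] /\
     [/\ s <> (0, 0)%N, T s & dot a s <= 0].
Proof.
move=> S0 T0 [_ H0] [hS _] [hT _].
have Hge : forall x, S x -> 0 <= dot a x by move=> x Sx; rewrite -(@dot0 R a); apply: H0.
have [p [[Sp Hp] p0]] := @nonzero_of _ hS.
have [s [[Ts Hs] s0]] := @nonzero_of _ hT.
exists p, s; split; split => //.
- by apply/eqP; rewrite eq_le Hge // andbT -(@dot0 R a); apply: Hp.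
- by rewrite -(@dot0 R a); apply: Hs.
Qed.

Lemma uniq_face (R : realType) (A1 A2 : set (nat * nat)) G G' (a b : R * R) :
  A1 (0, 0)%N -> A2 (0, 0)%N ->
  supports A1 A2 G a -> supports A1 A2 G' b -> 0 < a.1 * b.1 ->
  semi_origin G -> semi_origin G' -> long_face R G -> long_face R G' -> G = G'.
Proof.
move=> h1 h2; case: G => G1 G2; case: G' => G1' G2'.
rewrite /supports /= => -[e1 e2] [e1' e2'] hab; subst.
rewrite /semi_origin /long_face /= => so so' [l1 l2] [l1' l2'].
suff hpar : a.1 * b.2 = a.2 * b.1 by rewrite !(@faceS_par R _ _ _ hab hpar).
have P := @nzpos R.
case: so => so; case: so' => so'.
- have [p [s [[p0 Sp ap Sa] _]]] := @extract R _ _ _ h1 h2 so l1 l2.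
  have [q [t [[q0 Sq bq Sb] _]]] := @extract R _ _ _ h1 h2 so' l1' l2'.
  have := Sa _ Sq; have := Sb _ Sp; move: ap bq; rewrite /dot => ap bq Hb Ha.
  exact: (@coreA R _ _ _ _ _ _ _ _ hab (ler0n _ _) (ler0n _ _) (P _ p0)
            (ler0n _ _) (ler0n _ _) (P _ q0) ap bq Ha Hb).
- have [p [s [[p0 Sp ap Sa] [s0 Ts as_]]]] := @extract R _ _ _ h1 h2 so l1 l2.
  have [q [t [[q0 Sq bq Sb] [t0 Tt bt]]]] := @extract R _ _ _ h2 h1 so' l2' l1'.
  have := Sa _ Tt; have := Sb _ Ts; move: ap bq as_ bt; rewrite /dot => ap bq as_ bt Hbs Hat.
  exact: (@coreB R _ _ _ _ _ _ _ _ _ _ _ _ hab (ler0n _ _) (ler0n _ _) (P _ p0)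
            (ler0n _ _) (ler0n _ _) (P _ q0) (ler0n _ _) (ler0n _ _) (P _ s0)
            (ler0n _ _) (ler0n _ _) (P _ t0) ap bq as_ Hbs bt Hat).
- have [p [s [[p0 Sp ap Sa] [s0 Ts as_]]]] := @extract R _ _ _ h2 h1 so l2 l1.
  have [q [t [[q0 Sq bq Sb] [t0 Tt bt]]]] := @extract R _ _ _ h1 h2 so' l1' l2'.
  have := Sa _ Tt; have := Sb _ Ts; move: ap bq as_ bt; rewrite /dot => ap bq as_ bt Hbs Hat.
  exact: (@coreB R _ _ _ _ _ _ _ _ _ _ _ _ hab (ler0n _ _) (ler0n _ _) (P _ p0)
            (ler0n _ _) (ler0n _ _) (P _ q0) (ler0n _ _) (ler0n _ _) (P _ s0)
            (ler0n _ _) (ler0n _ _) (P _ t0) ap bq as_ Hbs bt Hat).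
- have [p [s [[p0 Sp ap Sa] _]]] := @extract R _ _ _ h2 h1 so l2 l1.
  have [q [t [[q0 Sq bq Sb] _]]] := @extract R _ _ _ h2 h1 so' l2' l1'.
  have := Sa _ Sq; have := Sb _ Sp; move: ap bq; rewrite /dot => ap bq Hb Ha.
  exact: (@coreA R _ _ _ _ _ _ _ _ hab (ler0n _ _) (ler0n _ _) (P _ p0)
            (ler0n _ _) (ler0n _ _) (P _ q0) ap bq Ha Hb).
Qed.

Lemma supp0 (R : realType) (f : {poly {poly R[i]}}) :
  eval2 f 0 0 != 0 -> supp f (0, 0)%N.
Proof. by rewrite /eval2 /supp /= polyC0 !horner_coef0. Qed.

Theorem lemma5p3 (R : realType) (f1 f2 : {poly {poly R[i]}}) :
  generically_non_proper f1 f2 ->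
  (forall G G' : set (nat * nat) * set (nat * nat),
     is_face R (supp f1) (supp f2) G -> relevant R (supp f1) (supp f2) G ->
     long_face R G -> right_face R (supp f1) (supp f2) G ->
     is_face R (supp f1) (supp f2) G' -> relevant R (supp f1) (supp f2) G' ->
     long_face R G' -> right_face R (supp f1) (supp f2) G' ->
     G = G') /\
  (forall G G' : set (nat * nat) * set (nat * nat),
     is_face R (supp f1) (supp f2) G -> relevant R (supp f1) (supp f2) G ->
     long_face R G -> left_face R (supp f1) (supp f2) G ->
     is_face R (supp f1) (supp f2) G' -> relevant R (supp f1) (supp f2) G' ->
     long_face R G' -> left_face R (supp f1) (supp f2) G' ->
     G = G').
Proof.
case=> _ _ [n1 n2] _.
have h1 := @supp0 R _ n1; have h2 := @supp0 R _ n2.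
split=> G G' _ [so _] l [a [sa ha]] _ [so' _] l' [b [sb hb]].
- apply: (@uniq_face R _ _ _ _ _ _ h1 h2 sa sb _ so so' l l'); nra.
- apply: (@uniq_face R _ _ _ _ _ _ h1 h2 sa sb _ so so' l l'); nra.
Qed.
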